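(* Let $N$ be a weakly connected forward-backward conflict free Petri net without self-loops having at least one proper source place or at least one proper sink place. If the only-sink marking $M_d$ is reachable from the only-source marking $M_0$, then $N$ is acyclic.
   Context: A Petri net $N=(P,T,{}^\bullet(-),(-)^\bullet)$ consists of disjoint finite sets $P$ (places) and $T$ (transitions) and functions ${}^\bullet(-),(-)^\bullet\colon T\to\mathcal P(P)$ giving inputs and outputs of each transition; arcs $p\to t$ iff $p\in{}^\bullet t$, $t\to p$ iff $p\in t^\bullet$. For a place $p$, ${}^\bullet p=\{t:p\in t^\bullet\}$, $p^\bullet=\{t:p\in{}^\bullet t\}$. No self-loops: no place is both input and output of the same transition. FBCF: $|{}^\bullet p|\le1$ and $|p^\bullet|\le1$ for all places. A source is a place with ${}^\bullet p=\emptyset$, a sink one with $p^\bullet=\emptyset$; a proper source is a source with $p^\bullet\ne\emptyset$, a proper sink a sink with ${}^\bullet p\neq\emptyset$. $N$ is weakly connected if its underlying undirected graph is connected, and acyclic if it has no directed cycle. A marking is $M\colon P\to\mathbb N$; $t$ is enabled if $M(p)\ge1$ for all $p\in{}^\bullet t$, and firing it subtracts one token from each $p\in{}^\bullet t$ and adds one to each $p\in t^\bullet$. $M$ is reachable from $M_0$ if obtained by a finite sequence of firings of enabled transitions. $M_0(p)=1$ if $p$ is a source, $0$ otherwise; $M_d(p)=1$ if $p$ is a sink, $0$ otherwise. *)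

(* Defs.v *)
From mathcomp Require Import all_boot.
Set Implicit Arguments. Unset Strict Implicit. Unset Printing Implicit Defensive.

(* A Petri net: places are a finType P, transitions a finType T (disjoint
   since they are different types), with input sets pre t = •t and output
   sets post t = t•. *)
Record petri_net (P T : finType) := PetriNet {
  pre  : T -> {set P};
  post : T -> {set P} }.

Section PN.
Variables (P T : finType) (N : petri_net P T).

Definition pre_place (p : P) : {set T} := [set t | p \in post N t].
Definition post_place (p : P) : {set T} := [set t | p \in pre N t].

Definition no_self_loops : Prop :=
  forall t : T, [disjoint pre N t & post N t].

Definition FBCF : Prop :=
  forall p : P, #|pre_place p| <= 1 /\ #|post_place p| <= 1.

Definition is_source (p : P) : bool := pre_place p == set0.
Definition is_sink (p : P) : bool := post_place p == set0.
Definition proper_source (p : P) : bool := is_source p && (post_place p != set0).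
Definition proper_sink (p : P) : bool := is_sink p && (pre_place p != set0).

Definition arc (x y : P + T) : bool :=
  match x, y with
  | inl p, inr t => p \in pre N t
  | inr t, inl p => p \in post N t
  | _, _ => false
  end.

Definition weakly_connected : Prop :=
  forall x y : P + T, connect (fun a b => arc a b || arc b a) x y.

Definition acyclic : Prop :=
  forall x y : P + T, arc x y -> ~~ connect arc y x.

Definition marking := {ffun P -> nat}.

Definition enabled (M : marking) (t : T) : bool :=
  [forall p in pre N t, 0 < M p].

Definition fire (M : marking) (t : T) : marking :=
  [ffun p => M p - (p \in pre N t) + (p \in post N t)].

Inductive reachable (M0 : marking) : marking -> Prop :=
  | reach_refl : reachable M0 M0
  | reach_step M t : reachable M0 M -> enabled M t -> reachable M0 (fire M t).

Definition M_0 : marking := [ffun p => nat_of_bool (is_source p)].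
Definition M_d : marking := [ffun p => nat_of_bool (is_sink p)].

End PN.

(* Main.v *)
Require Import Defs.
From mathcomp Require Import all_boot.
From mathcomp Require Import zify.

Set Implicit Arguments. Unset Strict Implicit. Unset Printing Implicit Defensive.

Lemma connect_last (X : finType) (e : rel X) x y :
  connect e x y -> x != y -> exists z, connect e x z /\ e z y.
Proof.
move/connectP=> [p]; elim/last_ind: p => [|p z _] /=.
  by move=> _ ->; rewrite eqxx.
rewrite rcons_path last_rcons => /andP[pth ez] -> _.
exists (last x p); split=> //; apply/connectP; by exists p.
Qed.

Lemma connect_good (X : finType) (e : rel X) (g : X -> bool) x y :
  (forall a b, e a b -> g a -> g b) -> connect e x y -> g x -> g y.
Proof.
move=> H /connectP [s]; elim: s x => [|z s IH] x /=; first by move=> _ ->.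
by move=> /andP[exz pth] ey gx; apply: (IH z) => //; apply: H gx.
Qed.

Section Proof.
Variables (P T : finType) (N : petri_net P T).
Hypothesis fbcf : FBCF N.

Definition oncyc (x : P + T) := exists y, Defs.arc N x y /\ connect (Defs.arc N) y x.

Lemma uniq_pre p u u' : p \in pre N u -> p \in pre N u' -> u = u'.
Proof.
move=> h1 h2; have [_ /card_le1_eqP H] := fbcf p.
by apply: H; rewrite /post_place inE.
Qed.

Lemma uniq_post p u u' : p \in post N u -> p \in post N u' -> u = u'.
Proof.
move=> h1 h2; have [/card_le1_eqP H _] := fbcf p.
by apply: H; rewrite /pre_place inE.
Qed.

Lemma L0 q : oncyc (inl q) -> exists u, q \in post N u.
Proof.
move=> [y [axy cyx]]; have ne : y != inl q by case: y axy cyx.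
have [z [_ ezq]] := connect_last cyx ne.
by case: z ezq => // u hu; exists u.
Qed.

Lemma L1 t : oncyc (inr t) -> exists q, q \in pre N t /\ oncyc (inl q).
Proof.
move=> [y [axy cyx]]; have ne : y != inr t by case: y axy cyx.
have [z [cyz ezt]] := connect_last cyx ne.
case: z cyz ezt => // q cyq hq; exists q; split=> //.
exists (inr t); split=> //.
exact: connect_trans (connect1 axy) cyq.
Qed.

Lemma L2 q u : oncyc (inl q) -> q \in post N u -> oncyc (inr u).
Proof.
move=> [y [axy cyx]] hu; have ne : y != inl q by case: y axy cyx.
have [z [cyz ezq]] := connect_last cyx ne.
case: z cyz ezq => // u' cyu' hu'.
have <- := uniq_post hu' hu.
exists (inl q); split=> //.
exact: connect_trans (connect1 axy) cyu'.
Qed.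

Lemma sum_split (c : T -> nat) (t : T) (f : T -> nat) :
  \sum_u (c u + (u == t)) * f u = \sum_u c u * f u + f t.
Proof.
rewrite (eq_bigr (fun u => c u * f u + (u == t) * f u)); last by move=> u _; rewrite mulnDl.
rewrite big_split /=; congr (_ + _).
rewrite (bigD1 t) //= eqxx mul1n big1 ?addn0 // => u /negbTE ->; by rewrite mul0n.
Qed.

Lemma sum_pos (c : T -> nat) (b : T -> bool) :
  0 < \sum_u c u * b u -> exists u, b u /\ 0 < c u.
Proof.
move=> H; case: (boolP [exists u, b u && (0 < c u)]).
  by move=> /existsP [u /andP[h1 h2]]; exists u.
move=> /existsPn hn; move: H; rewrite big1 // => u _.
move: (hn u); case: (b u) => /=; last by rewrite muln0.
by case: (c u).
Qed.

Lemma sum_ge (c : T -> nat) (b : T -> bool) u :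
  b u -> c u <= \sum_u c u * b u.
Proof.
move=> bu; rewrite (bigD1 u) //= bu muln1; exact: leq_addr.
Qed.

Definition Eqn (M0 M : marking P) (c : T -> nat) :=
  forall p, M p + \sum_u c u * (p \in pre N u) = M0 p + \sum_u c u * (p \in post N u).

Lemma inv Mx : reachable N (M_0 N) Mx -> exists c : T -> nat,
  Eqn (M_0 N) Mx c /\ (forall t, oncyc (inr t) -> c t = 0).
Proof.
elim=> [|M t _ [c [E C]] en].
  exists (fun _ => 0); split=> // p; rewrite !big1 //.
have zero q : oncyc (inl q) -> M q = 0.
  move=> hq; have := E q.
  rewrite [X in _ = _ + X]big1; last first.
    move=> u _; case hu: (q \in post N u); last by rewrite muln0.
    by rewrite (C u (L2 hq hu)).
  have [u hu] := L0 hq.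
  rewrite /M_0 ffunE /is_source.
  have -> : (pre_place N q == set0) = false.
    by apply/negbTE/set0Pn; exists u; rewrite inE.
  by rewrite /= addn0 => /eqP; rewrite addn_eq0 => /andP[/eqP].
exists (fun u => c u + (u == t)); split.
  move=> p; rewrite !sum_split /fire ffunE.
  have := E p.
  case hp: (p \in pre N t) => /=.
    have : 0 < M p by move/forall_inP: en => /(_ p hp).
    lia.
  lia.
move=> t' ht'; rewrite (C t' ht').
case: eqP => // ->{t'} in ht' *.
have [q [hq cq]] := L1 ht'.
move/forall_inP: en => /(_ q hq); by rewrite zero.
Qed.

End Proof.

Theorem mainTheorem6 (P T : finType) (N : petri_net P T) :
  weakly_connected N -> FBCF N -> no_self_loops N ->
  ((exists p : P, proper_source N p) \/ (exists p : P, proper_sink N p)) ->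
  reachable N (M_0 N) (M_d N) ->
  acyclic N.
Proof.
move=> wc fbcf _ hps reach.
have [c [E C]] := inv fbcf reach.
have Ep p : is_sink N p + \sum_u c u * (p \in pre N u) =
            is_source N p + \sum_u c u * (p \in post N u).
  by have := E p; rewrite /M_0 /M_d !ffunE.
have pass p t t' : p \in post N t -> p \in pre N t' -> (0 < c t) = (0 < c t').
  move=> ht ht'; have := Ep p.
  have -> : is_sink N p = false by apply/negbTE/set0Pn; exists t'; rewrite inE.
  have -> : is_source N p = false by apply/negbTE/set0Pn; exists t; rewrite inE.
  rewrite /= !add0n => EQ.
  apply/idP/idP => h.
    have : 0 < \sum_u c u * (p \in post N u) by apply: leq_trans h (sum_ge c ht).
    rewrite -EQ => /sum_pos [u [hu cu]]; by rewrite -(uniq_pre fbcf hu ht').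
  have : 0 < \sum_u c u * (p \in pre N u) by apply: leq_trans h (sum_ge c ht').
  rewrite EQ => /sum_pos [u [hu cu]]; by rewrite -(uniq_post fbcf hu ht).
have [t0 ct0] : exists t0, 0 < c t0.
  case: hps => [[p /andP[src /set0Pn [t ht]]]|[p /andP[snk /set0Pn [t ht]]]];
    exists t; rewrite inE in ht; have := Ep p.
    rewrite src.
    have -> : is_sink N p = false by apply/negbTE/set0Pn; exists t; rewrite inE.
    rewrite add0n => EQ.
    have : 0 < \sum_u c u * (p \in pre N u) by rewrite EQ.
    move/sum_pos => [u [hu cu]]; by rewrite -(uniq_pre fbcf hu ht).
  rewrite snk.
  have -> : is_source N p = false by apply/negbTE/set0Pn; exists t; rewrite inE.
  rewrite add0n => EQ.
  have : 0 < \sum_u c u * (p \in post N u) by rewrite -EQ.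
  move/sum_pos => [u [hu cu]]; by rewrite -(uniq_post fbcf hu ht).
pose g (x : P + T) : bool := match x with
  | inr t => 0 < c t
  | inl p => [forall t, ((p \in pre N t) || (p \in post N t)) ==> (0 < c t)] end.
have step a b : (Defs.arc N a b || Defs.arc N b a) -> g a -> g b.
  case: a => [p|t]; case: b => [q|t'] //=.
  - by move=> h /forallP /(_ t') /implyP H; exact: H h.
  - rewrite orbC => h ct; apply/forallP => t' /=; apply/implyP => h'.
    case: (eqVneq t' t) => [-> //|ne].
    case/orP: h => h; case/orP: h' => h'.
    + by rewrite (uniq_pre fbcf h' h) eqxx in ne.
    + by rewrite (pass _ _ _ h' h).
    + by rewrite -(pass _ _ _ h h').
    + by rewrite (uniq_post fbcf h' h) eqxx in ne.
have all_pos t : 0 < c t.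
  exact: (connect_good (g := g) step (wc (inr t0) (inr t)) ct0).
move=> x y axy; apply/negP => cyx.
have [t ht] : exists t, oncyc N (inr t).
  case: x axy cyx => [p|t] axy cyx; last by exists t; exists y.
  have hp : oncyc N (inl p) by exists y.
  have [u hu] := L0 hp; exists u; exact: (@L2 _ _ N fbcf p u hp hu).
by have := all_pos t; rewrite (C t ht).
Qed.
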